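(* Let $\mathsf{L}\in\{\mathbf{PD},\mathsf{InqL},\mathbf{PT}\}$. For every formula $\phi$ in the language of $\mathsf{L}$, every flat substitution $\sigma$ of $\mathsf{L}$ and every team $X$: $X\models\sigma(\phi)$ if and only if $X_\sigma\models\phi$.
   Context: Fix a countably infinite set Prop of propositional variables. A valuation is a function $v:\mathrm{Prop}\to\{0,1\}$; a team is a set of valuations. Formulas of $\mathbf{PT}$: $\phi::=p\mid\bot\mid\top\mid\,=\!(\phi_1,\dots,\phi_n,\phi)\mid\neg\phi\mid\phi\wedge\phi\mid\phi\otimes\phi\mid\phi\vee\phi\mid\phi\to\phi$. Satisfaction on a team $X$: $X\models p$ iff $v(p)=1$ for all $v\in X$; $X\models\bot$ iff $X=\emptyset$; $X\models\top$ always; $\wedge$ is conjunction of conditions; $X\models\phi\otimes\psi$ iff $X=Y\cup Z$ with $Y\models\phi$, $Z\models\psi$; $X\models\phi\vee\psi$ iff $X\models\phi$ or $X\models\psi$; $X\models\phi\to\psi$ iff every $Y\subseteq X$ with $Y\models\phi$ satisfies $\psi$; $X\models\neg\phi$ iff $\{v\}\not\models\phi$ for all $v\in X$; $X\models\,=\!(\phi_1,\dots,\phi_n,\psi)$ iff $X\models\bigwedge_i(\phi_i\vee(\phi_i\to\bot))\to(\psi\vee(\psi\to\bot))$. $\phi$ is flat if for all teams $X$: $X\models\phi$ iff $\{v\}\models\phi$ for all $v\in X$. Formulas of $\mathbf{PD}$: $\phi::=p\mid\bot\mid\top\mid\,=\!(\vec\alpha,\beta)\mid\neg\phi\mid\phi\wedge\phi\mid\phi\otimes\phi$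 with $\vec\alpha,\beta$ flat, evaluated by the same clauses, where for $\mathbf{PD}$ the dependence clause is: $X\models\,=\!(\vec\alpha,\beta)$ iff for all $v,v'\in X$, if $\{v\}\models\alpha_i\Leftrightarrow\{v'\}\models\alpha_i$ for all $i$, then $\{v\}\models\beta\Leftrightarrow\{v'\}\models\beta$. $\mathsf{InqL}$: formulas built from $p,\bot,\top$ by $\wedge,\vee,\to$ with the same clauses. A substitution of $\mathsf L$ is a map on $\mathsf L$-formulas commuting with all connectives and atoms; it is flat if each $\sigma(p)$ is flat. For a valuation $v$ and substitution $\sigma$, $v_\sigma$ is the valuation with $v_\sigma(p)=1$ if $\{v\}\models\sigma(p)$ and $v_\sigma(p)=0$ otherwise; for a team $X$, $X_\sigma=\{v_\sigma\mid v\in X\}$. *)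

(* Defs.v *)
From Stdlib Require Import List.
Import ListNotations.

(* Prop = nat (countably infinite set of propositional variables). *)
Definition valuation := nat -> bool.
Definition team := valuation -> Prop.

Definition subteam (Y X : team) : Prop := forall v, Y v -> X v.
Definition empty_team (X : team) : Prop := forall v, ~ X v.
Definition is_union (X Y Z : team) : Prop := forall v, X v <-> (Y v \/ Z v).
Definition singleton (v : valuation) : team := fun w => w = v.

(* X_sigma = { v_sigma | v in X }, where v_sigma(p) = 1 iff {v} |= sigma(p).
   Parametrised by a satisfaction relation [sat] and the images [s p]. *)
Definition team_sub {F : Type} (sat : F -> team -> Prop) (s : nat -> F) (X : team) : team :=
  fun w => exists v, X v /\ (forall p, w p = true <-> sat (s p) (singleton v)).

Inductive PTform : Type :=
| PTvar : nat -> PTform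
| PTbot : PTform
| PTtop : PTform
| PTdep : list PTform -> PTform -> PTform
| PTneg : PTform -> PTform
| PTand : PTform -> PTform -> PTform
| PTtensor : PTform -> PTform -> PTform
| PTor : PTform -> PTform -> PTform
| PTimp : PTform -> PTform -> PTform.

(* X |= phi \/ (phi -> bot) *)
Definition decides (S : team -> Prop) (Y : team) : Prop :=
  S Y \/ (forall Z, subteam Z Y -> S Z -> empty_team Z).

Fixpoint PTsat (phi : PTform) (X : team) {struct phi} : Prop :=
  match phi with
  | PTvar p => forall v, X v -> v p = true
  | PTbot => empty_team X
  | PTtop => True
  | PTdep l psi =>
      (* X |= /\_i (phi_i \/ (phi_i -> bot)) -> (psi \/ (psi -> bot)) *)
      forall Y, subteam Y X ->
        (let fix all_dec (l : list PTform) : Prop :=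
             match l with
             | [] => True
             | a :: l' => decides (PTsat a) Y /\ all_dec l'
             end in all_dec l) ->
        decides (PTsat psi) Y
  | PTneg a => forall v, X v -> ~ PTsat a (singleton v)
  | PTand a b => PTsat a X /\ PTsat b X
  | PTtensor a b => exists Y Z, is_union X Y Z /\ PTsat a Y /\ PTsat b Z
  | PTor a b => PTsat a X \/ PTsat b X
  | PTimp a b => forall Y, subteam Y X -> PTsat a Y -> PTsat b Y
  end.

Definition PTflat (phi : PTform) : Prop :=
  forall X, PTsat phi X <-> (forall v, X v -> PTsat phi (singleton v)).

Fixpoint PTsubst (s : nat -> PTform) (phi : PTform) {struct phi} : PTform :=
  match phi with
  | PTvar p => s p
  | PTbot => PTbot
  | PTtop => PTtop
  | PTdep l psi => PTdep (map (PTsubst s) l) (PTsubst s psi)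
  | PTneg a => PTneg (PTsubst s a)
  | PTand a b => PTand (PTsubst s a) (PTsubst s b)
  | PTtensor a b => PTtensor (PTsubst s a) (PTsubst s b)
  | PTor a b => PTor (PTsubst s a) (PTsubst s b)
  | PTimp a b => PTimp (PTsubst s a) (PTsubst s b)
  end.

Fixpoint InqL_form (phi : PTform) : Prop :=
  match phi with
  | PTvar _ | PTbot | PTtop => True
  | PTand a b | PTor a b | PTimp a b => InqL_form a /\ InqL_form b
  | _ => False
  end.

Inductive PDform : Type :=
| PDvar : nat -> PDform
| PDbot : PDform
| PDtop : PDform
| PDdep : list PDform -> PDform -> PDform
| PDneg : PDform -> PDform
| PDand : PDform -> PDform -> PDform
| PDtensor : PDform -> PDform -> PDform.

Fixpoint PDsat (phi : PDform) (X : team) {struct phi} : Prop :=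
  match phi with
  | PDvar p => forall v, X v -> v p = true
  | PDbot => empty_team X
  | PDtop => True
  | PDdep l b =>
      forall v v', X v -> X v' ->
        (let fix agree (l : list PDform) : Prop :=
             match l with
             | [] => True
             | a :: l' => (PDsat a (singleton v) <-> PDsat a (singleton v')) /\ agree l'
             end in agree l) ->
        (PDsat b (singleton v) <-> PDsat b (singleton v'))
  | PDneg a => forall v, X v -> ~ PDsat a (singleton v)
  | PDand a b => PDsat a X /\ PDsat b X
  | PDtensor a b => exists Y Z, is_union X Y Z /\ PDsat a Y /\ PDsat b Z
  end.

Definition PDflat (phi : PDform) : Prop :=
  forall X, PDsat phi X <-> (forall v, X v -> PDsat phi (singleton v)).

Fixpoint PD_wf (phi : PDform) : Prop :=
  match phi with
  | PDvar _ | PDbot | PDtop => True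
  | PDdep l b =>
      (let fix all_wf (l : list PDform) : Prop :=
           match l with
           | [] => True
           | a :: l' => (PD_wf a /\ PDflat a) /\ all_wf l'
           end in all_wf l) /\ (PD_wf b /\ PDflat b)
  | PDneg a => PD_wf a
  | PDand a b | PDtensor a b => PD_wf a /\ PD_wf b
  end.

Fixpoint PDsubst (s : nat -> PDform) (phi : PDform) {struct phi} : PDform :=
  match phi with
  | PDvar p => s p
  | PDbot => PDbot
  | PDtop => PDtop
  | PDdep l b => PDdep (map (PDsubst s) l) (PDsubst s b)
  | PDneg a => PDneg (PDsubst s a)
  | PDand a b => PDand (PDsubst s a) (PDsubst s b)
  | PDtensor a b => PDtensor (PDsubst s a) (PDsubst s b)
  end.

(* Main.v *)
Require Import Defs.
From Stdlib Require Import List Classical ClassicalEpsilon FunctionalExtensionality PropExtensionality.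
Import ListNotations.

Lemma team_eq (X Y : team) : (forall v, X v <-> Y v) -> X = Y.
Proof. intro H. apply functional_extensionality; intro v. apply propositional_extensionality; auto. Qed.

Definition img (f : valuation -> valuation) (X : team) : team :=
  fun w => exists v, X v /\ w = f v.

Definition pb (f : valuation -> valuation) (X : team) (Z : team) : team :=
  fun v => X v /\ Z (f v).

Lemma img_pb f X Z : subteam Z (img f X) -> img f (pb f X Z) = Z.
Proof.
  intro H; apply team_eq; intro w; split.
  - intros [v [[_ Hz] ->]]; exact Hz.
  - intro Hz. destruct (H w Hz) as [v [Hv ->]]. exists v; split; [split|]; auto.
Qed.

Lemma pb_sub f X Z : subteam (pb f X Z) X.
Proof. intros v [H _]; exact H. Qed.

Lemma img_sub f Y X : subteam Y X -> subteam (img f Y) (img f X).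
Proof. intros H w [v [Hv ->]]. exists v; auto. Qed.

Lemma img_empty f X : empty_team X <-> empty_team (img f X).
Proof.
  split.
  - intros H w [v [Hv _]]; exact (H v Hv).
  - intros H v Hv. apply (H (f v)). exists v; auto.
Qed.

Lemma img_single f v : img f (singleton v) = singleton (f v).
Proof.
  apply team_eq; intro w; split.
  - intros [u [Hu ->]]. unfold singleton in *; subst; reflexivity.
  - intro H. unfold singleton in H; subst. exists v; split; reflexivity.
Qed.

Lemma img_union f X Y Z : is_union X Y Z -> is_union (img f X) (img f Y) (img f Z).
Proof.
  intros H w; split.
  - intros [v [Hv ->]]. destruct (proj1 (H v) Hv); [left|right]; exists v; auto.
  - intros [[v [Hv ->]]|[v [Hv ->]]]; exists v; split; auto; apply H; auto.
Qed.

Lemma pb_union f X Y Z : is_union (img f X) Y Z ->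
  is_union X (pb f X Y) (pb f X Z) /\ subteam Y (img f X) /\ subteam Z (img f X).
Proof.
  intros H. split; [|split].
  - intro v; split.
    + intro Hv. assert (img f X (f v)) by (exists v; auto).
      destruct (proj1 (H _) H0); [left|right]; split; auto.
    + intros [[Hv _]|[Hv _]]; auto.
  - intros w Hw; apply H; auto.
  - intros w Hw; apply H; auto.
Qed.

Definition vs {F : Type} (sat : F -> team -> Prop) (s : nat -> F) (v : valuation) : valuation :=
  fun p => if excluded_middle_informative (sat (s p) (singleton v)) then true else false.

Lemma vs_spec {F} (sat : F -> team -> Prop) s v p : vs sat s v p = true <-> sat (s p) (singleton v).
Proof.
  unfold vs. destruct (excluded_middle_informative _); split; intros; auto; discriminate.
Qed.

Lemma team_sub_img {F} (sat : F -> team -> Prop) s X : team_sub sat s X = img (vs sat s) X.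
Proof.
  apply team_eq; intro w; split.
  - intros [v [Hv Hw]]. exists v; split; auto.
    apply functional_extensionality; intro p.
    pose proof (Hw p) as H1. pose proof (vs_spec sat s v p) as H2.
    destruct (w p); destruct (vs sat s v p); auto.
    + symmetry; apply H2, H1; reflexivity.
    + apply H1, H2; reflexivity.
  - intros [v [Hv ->]]. exists v; split; auto. intro p; apply vs_spec.
Qed.

Section PTind.
Variable P : PTform -> Prop.
Hypothesis Hvar : forall p, P (PTvar p).
Hypothesis Hbot : P PTbot.
Hypothesis Htop : P PTtop.
Hypothesis Hdep : forall l psi, Forall P l -> P psi -> P (PTdep l psi).
Hypothesis Hneg : forall a, P a -> P (PTneg a).
Hypothesis Hand : forall a b, P a -> P b -> P (PTand a b).
Hypothesis Hten : forall a b, P a -> P b -> P (PTtensor a b).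
Hypothesis Hor : forall a b, P a -> P b -> P (PTor a b).
Hypothesis Himp : forall a b, P a -> P b -> P (PTimp a b).
Fixpoint PTind' (phi : PTform) : P phi :=
  match phi with
  | PTvar p => Hvar p
  | PTbot => Hbot
  | PTtop => Htop
  | PTdep l psi => Hdep l psi
      ((fix F (l : list PTform) : Forall P l :=
          match l with
          | [] => Forall_nil _
          | a :: l' => Forall_cons _ (PTind' a) (F l')
          end) l) (PTind' psi)
  | PTneg a => Hneg a (PTind' a)
  | PTand a b => Hand a b (PTind' a) (PTind' b)
  | PTtensor a b => Hten a b (PTind' a) (PTind' b)
  | PTor a b => Hor a b (PTind' a) (PTind' b)
  | PTimp a b => Himp a b (PTind' a) (PTind' b)
  end.
End PTind.

Section PDind.
Variable P : PDform -> Prop.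
Hypothesis Hvar : forall p, P (PDvar p).
Hypothesis Hbot : P PDbot.
Hypothesis Htop : P PDtop.
Hypothesis Hdep : forall l psi, Forall P l -> P psi -> P (PDdep l psi).
Hypothesis Hneg : forall a, P a -> P (PDneg a).
Hypothesis Hand : forall a b, P a -> P b -> P (PDand a b).
Hypothesis Hten : forall a b, P a -> P b -> P (PDtensor a b).
Fixpoint PDind' (phi : PDform) : P phi :=
  match phi with
  | PDvar p => Hvar p
  | PDbot => Hbot
  | PDtop => Htop
  | PDdep l psi => Hdep l psi
      ((fix F (l : list PDform) : Forall P l :=
          match l with
          | [] => Forall_nil _
          | a :: l' => Forall_cons _ (PDind' a) (F l')
          end) l) (PDind' psi)
  | PDneg a => Hneg a (PDind' a)
  | PDand a b => Hand a b (PDind' a) (PDind' b)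
  | PDtensor a b => Hten a b (PDind' a) (PDind' b)
  end.
End PDind.

Fixpoint all_decT (l : list PTform) (Y : team) : Prop :=
  match l with
  | [] => True
  | a :: l' => decides (PTsat a) Y /\ all_decT l' Y
  end.

Fixpoint agreeD (l : list PDform) (v v' : valuation) : Prop :=
  match l with
  | [] => True
  | a :: l' => (PDsat a (singleton v) <-> PDsat a (singleton v')) /\ agreeD l' v v'
  end.

Lemma PTdep_eq l psi X : PTsat (PTdep l psi) X <->
  (forall Y, subteam Y X -> all_decT l Y -> decides (PTsat psi) Y).
Proof. simpl. split; intros H Y HY Hd; apply H; auto; revert Hd; clear; induction l; simpl; tauto. Qed.

Lemma PDdep_eq l b X : PDsat (PDdep l b) X <->
  (forall v v', X v -> X v' -> agreeD l v v' ->
     (PDsat b (singleton v) <-> PDsat b (singleton v'))).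
Proof. simpl. split; intros H v v' Hv Hv' Hd; apply H; auto; revert Hd; clear; induction l; simpl; tauto. Qed.

Section PTmain.
Variable s : nat -> PTform.
Variable f : valuation -> valuation.
Hypothesis Hf : forall v p, f v p = true <-> PTsat (s p) (singleton v).
Hypothesis Hflat : forall p, PTflat (s p).

Lemma decides_tr a : (forall X, PTsat (PTsubst s a) X <-> PTsat a (img f X)) ->
  forall Y, decides (PTsat (PTsubst s a)) Y <-> decides (PTsat a) (img f Y).
Proof.
  intros IH Y; unfold decides; split; intros [H|H].
  - left; apply IH; auto.
  - right. intros Z' HZ Ha. rewrite <- (img_pb f Y Z' HZ) in *.
    apply img_empty. apply H; [apply pb_sub|]. apply IH; auto.
  - left; apply IH; auto.
  - right. intros Z HZ Ha. apply (img_empty f). apply H; [apply img_sub; auto|].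
    apply IH; auto.
Qed.

Lemma PTmain : forall phi X, PTsat (PTsubst s phi) X <-> PTsat phi (img f X).
Proof.
  induction phi using PTind'; intro X; simpl PTsubst.
  - simpl. rewrite (Hflat p X). split.
    + intros H w [v [Hv ->]]. apply Hf; auto.
    + intros H v Hv. apply Hf. apply H. exists v; auto.
  - simpl. apply img_empty.
  - simpl; tauto.
  - rewrite !PTdep_eq.
    assert (HL : forall Y, all_decT (map (PTsubst s) l) Y <-> all_decT l (img f Y)).
    { intro Y; induction H as [|a l Ha Hl IHl]; simpl; [tauto|].
      rewrite (decides_tr a Ha Y). tauto. }
    split.
    + intros H0 Z' HZ Hd. rewrite <- (img_pb f X Z' HZ) in *.
      apply decides_tr; auto. apply H0; [apply pb_sub|]. apply HL; auto.
    + intros H0 Y HY Hd. apply decides_tr; auto. apply H0; [apply img_sub; auto|].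
      apply HL; auto.
  - simpl. split.
    + intros H w [v [Hv ->]] Ha. apply (H v Hv). apply IHphi. rewrite img_single; auto.
    + intros H v Hv Ha. apply IHphi in Ha. rewrite img_single in Ha.
      apply (H (f v)); auto. exists v; auto.
  - simpl. rewrite IHphi1, IHphi2; tauto.
  - simpl. split.
    + intros [Y [Z [HU [Ha Hb]]]]. exists (img f Y), (img f Z).
      split; [apply img_union; auto|]. split; [apply IHphi1|apply IHphi2]; auto.
    + intros [Y [Z [HU [Ha Hb]]]]. destruct (pb_union f X Y Z HU) as [HU' [HY HZ]].
      exists (pb f X Y), (pb f X Z). split; auto. split.
      * apply IHphi1. rewrite img_pb; auto.
      * apply IHphi2. rewrite img_pb; auto.
  - simpl. rewrite IHphi1, IHphi2; tauto.
  - simpl. split.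
    + intros H Z' HZ Ha. rewrite <- (img_pb f X Z' HZ) in *.
      apply IHphi2. apply H; [apply pb_sub|]. apply IHphi1; auto.
    + intros H Y HY Ha. apply IHphi2. apply H; [apply img_sub; auto|].
      apply IHphi1; auto.
Qed.
End PTmain.

Section PDmain.
Variable s : nat -> PDform.
Variable f : valuation -> valuation.
Hypothesis Hf : forall v p, f v p = true <-> PDsat (s p) (singleton v).
Hypothesis Hflat : forall p, PDflat (s p).

Lemma PDmain : forall phi X, PDsat (PDsubst s phi) X <-> PDsat phi (img f X).
Proof.
  induction phi using PDind'; intro X; simpl PDsubst.
  - simpl. rewrite (Hflat p X). split.
    + intros H w [v [Hv ->]]. apply Hf; auto.
    + intros H v Hv. apply Hf. apply H. exists v; auto.
  - simpl. apply img_empty.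
  - simpl; tauto.
  - rewrite !PDdep_eq.
    assert (Hs : forall a, (forall X, PDsat (PDsubst s a) X <-> PDsat a (img f X)) ->
               forall v, PDsat (PDsubst s a) (singleton v) <-> PDsat a (singleton (f v))).
    { intros a Ha v. rewrite Ha, img_single; tauto. }
    assert (HL : forall v v', agreeD (map (PDsubst s) l) v v' <-> agreeD l (f v) (f v')).
    { intros v v'; induction H as [|a l Ha Hl IHl]; simpl; [tauto|].
      rewrite (Hs a Ha v), (Hs a Ha v'). tauto. }
    split.
    + intros H0 w w' [v [Hv ->]] [v' [Hv' ->]] Ha.
      rewrite <- (Hs _ IHphi v), <- (Hs _ IHphi v'). apply H0; auto. apply HL; auto.
    + intros H0 v v' Hv Hv' Ha. rewrite (Hs _ IHphi v), (Hs _ IHphi v').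
      apply H0; [exists v; auto|exists v'; auto|]. apply HL; auto.
  - simpl. split.
    + intros H w [v [Hv ->]] Ha. apply (H v Hv). apply IHphi. rewrite img_single; auto.
    + intros H v Hv Ha. apply IHphi in Ha. rewrite img_single in Ha.
      apply (H (f v)); auto. exists v; auto.
  - simpl. rewrite IHphi1, IHphi2; tauto.
  - simpl. split.
    + intros [Y [Z [HU [Ha Hb]]]]. exists (img f Y), (img f Z).
      split; [apply img_union; auto|]. split; [apply IHphi1|apply IHphi2]; auto.
    + intros [Y [Z [HU [Ha Hb]]]]. destruct (pb_union f X Y Z HU) as [HU' [HY HZ]].
      exists (pb f X Y), (pb f X Z). split; auto. split.
      * apply IHphi1. rewrite img_pb; auto.
      * apply IHphi2. rewrite img_pb; auto.
Qed.
End PDmain.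

Theorem lemma3p5 :
  (* L = PD *)
  (forall (phi : PDform) (s : nat -> PDform) (X : team),
      PD_wf phi -> (forall p, PD_wf (s p) /\ PDflat (s p)) ->
      (PDsat (PDsubst s phi) X <-> PDsat phi (team_sub PDsat s X))) /\
  (* L = InqL *)
  (forall (phi : PTform) (s : nat -> PTform) (X : team),
      InqL_form phi -> (forall p, InqL_form (s p) /\ PTflat (s p)) ->
      (PTsat (PTsubst s phi) X <-> PTsat phi (team_sub PTsat s X))) /\
  (* L = PT *)
  (forall (phi : PTform) (s : nat -> PTform) (X : team),
      (forall p, PTflat (s p)) ->
      (PTsat (PTsubst s phi) X <-> PTsat phi (team_sub PTsat s X))).
Proof.
  split; [|split].
  - intros phi s X _ Hs. rewrite team_sub_img. apply PDmain.
    + apply vs_spec.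
    + intro p; apply Hs.
  - intros phi s X _ Hs. rewrite team_sub_img. apply PTmain.
    + apply vs_spec.
    + intro p; apply Hs.
  - intros phi s X Hs. rewrite team_sub_img. apply PTmain; auto. apply vs_spec.
Qed.
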